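(* Let $Q$ be a finite set with $|Q|\ge 2$, and let $\mathrm{sel}(Q)$ be the smallest cardinality of a selective family for $Q$. If $m$ is the least positive integer such that $|Q|\le\binom{m}{\lfloor m/2\rfloor}$, then $\mathrm{sel}(Q)=m$.
   Context: A family $\mathscr{S}=\{S_i:i\in I\}$ of distinct nonempty subsets of $Q$ is selective for $Q$ if for every $q\in Q$ there is a nonempty $I(q)\subseteq I$ with $\{q\}=\bigcap_{i\in I(q)}S_i$. (The family of all singletons $\{q\}$, $q\in Q$, is always selective, so $\mathrm{sel}(Q)$ is well defined.) *)

(* Defs.v *)
From mathcomp Require Import all_boot.
Set Implicit Arguments. Unset Strict Implicit. Unset Printing Implicit Defensive.

(* The finite set Q is modelled as a finite type T; a family of distinct
   subsets of Q is a set F : {set {set T}} (distinctness is automatic). *)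

Definition selective (T : finType) (F : {set {set T}}) : bool :=
  (set0 \notin F) &&
  [forall q : T, exists I : {set {set T}},
     [&& I \subset F, I != set0 & \bigcap_(S in I) S == [set q]]].

Lemma singletons_selective (T : finType) :
  selective [set [set q] | q : T].
Proof.
apply/andP; split.
  apply/imsetP => -[q _ /esym/eqP]; apply/negP.
  by apply/set0Pn; exists q; rewrite set11.
apply/forallP => q; apply/existsP; exists [set [set q]].
apply/and3P; split.
- by rewrite sub1set; apply/imsetP; exists q.
- by apply/set0Pn; exists [set q]; rewrite set11.
- by rewrite big_set1.
Qed.

Lemma exists_selective_card (T : finType) :
  exists n, [exists F : {set {set T}}, selective F && (#|F| == n)].
Proof.
exists #|[set [set q] | q : T]|; apply/existsP.
by exists [set [set q] | q : T]; rewrite singletons_selective eqxx.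
Qed.

Definition sel (T : finType) : nat := ex_minn (exists_selective_card T).

(* Main.v *)
Require Import Defs.
From mathcomp Require Import all_boot zify.
Set Implicit Arguments. Unset Strict Implicit. Unset Printing Implicit Defensive.

Lemma hd d : d = d./2 + d./2 + odd d.
Proof. by rewrite -{1}(odd_double_half d) -addnn addnC. Qed.

Lemma half_le d : d./2 <= d.
Proof. have := hd d; lia. Qed.

Lemma bin_step d m : m.+1 <= d./2 -> 'C(d, m) <= 'C(d, m.+1).
Proof.
move=> h; have e := mul_bin_left d m.
have h2 : m.+1 <= d - m by have := hd d; lia.
have : m.+1 * 'C(d, m) <= m.+1 * 'C(d, m.+1).
  rewrite e; exact: leq_mul.
by rewrite leq_pmul2l.
Qed.

Lemma bin_max d k : k <= d -> 'C(d, k) <= 'C(d, d./2).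
Proof.
have up : forall j m, m + j = d./2 -> 'C(d, m) <= 'C(d, d./2).
  elim=> [|j IH] m hm; first by rewrite -hm addn0.
  apply: leq_trans (bin_step _) (IH m.+1 _); lia.
move=> hk; case: (leqP k d./2) => hk2.
  apply: (up (d./2 - k)); lia.
rewrite -bin_sub //; apply: (up (d./2 - (d - k))).
have := hd d; case: odd => /=; lia.
Qed.

Lemma weight_min d k : k <= d -> (d./2)`! * (d - d./2)`! <= k`! * (d - k)`!.
Proof.
move=> hk.
have h1 := bin_fact hk.
have h2 := bin_fact (half_le d).
have hp : 0 < 'C(d, d./2) by rewrite bin_gt0 half_le.
rewrite -(leq_pmul2l hp) h2 -h1; apply: leq_mul => //; exact: bin_max.
Qed.

Lemma lym (U : finType) n : forall (D : {set U}) (G : {set {set U}}),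
  #|D| = n -> (forall A, A \in G -> A \subset D) ->
  (forall A B, A \in G -> B \in G -> A \subset B -> A = B) ->
  \sum_(A in G) #|A|`! * (#|D| - #|A|)`! <= #|D|`!.
Proof.
elim: n => [|n IH] D G hD hsub hanti.
- case: (boolP (D \in G)) => hDG.
    have -> : G = [set D].
      apply/setP=> A; rewrite in_set1; apply/idP/eqP => [hA|->//].
      exact: hanti hA hDG (hsub A hA).
    by rewrite big_set1 subnn muln1.
  have -> : G = set0.
    apply/setP=> A; rewrite in_set0; apply/negP=> hA.
    move/eqP: hD; rewrite cards_eq0 => /eqP eD; subst D.
    have := hsub A hA.
    by rewrite subset0 => /eqP eA; subst A; rewrite hA in hDG.
  by rewrite big_set0.
case: (boolP (D \in G)) => hDG.
  have -> : G = [set D].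
    apply/setP=> A; rewrite in_set1; apply/idP/eqP => [hA|->//].
    exact: hanti hA hDG (hsub A hA).
  by rewrite big_set1 subnn muln1.
pose w (A : {set U}) := #|A|`! * (n - #|A|)`!.
have step1 : forall A, A \in G ->
   #|A|`! * (#|D| - #|A|)`! = \sum_(x in D) (if x \notin A then w A else 0).
  move=> A hA.
  rewrite -big_mkcondr /= sum_nat_const.
  have hc : #|[pred x in D | x \notin A]| = #|D :\: A|.
    by apply: eq_card => x; rewrite !inE andbC.
  have hAD := hsub A hA.
  have hne : A != D by apply: contraNneq hDG => <-.
  have hlt : #|A| < #|D|.
    by rewrite proper_card // properEneq hne hAD.
  rewrite hc cardsD (setIidPr hAD) /w.
  rewrite hD in hlt *.
  have -> : n.+1 - #|A| = (n - #|A|).+1 by lia.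
  rewrite factS; lia.
rewrite (eq_bigr _ step1) exchange_big /=.
apply: (@leq_trans (\sum_(x in D) n`!)); last first.
  by rewrite sum_nat_const hD factS mulnC.
apply: leq_sum => x hx.
rewrite -big_mkcondr /=.
have hD' : #|D :\ x| = n by have := cardsD1 x D; rewrite hx hD; lia.
have := IH (D :\ x) [set A in G | x \notin A] hD' _ _.
rewrite hD'.
have -> : \sum_(A in [set A in G | x \notin A]) #|A|`! * (n - #|A|)`! =
          \sum_(A in G | x \notin A) w A.
  by apply: eq_bigl => A; rewrite inE.
apply.
- move=> A; rewrite inE => /andP[hA hxA].
  apply/subsetP=> y hy; rewrite !inE (subsetP (hsub A hA) y hy) andbT.
  by apply: contraNneq hxA => <-.
- move=> A B; rewrite !inE => /andP[hA _] /andP[hB _]; exact: hanti.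
Qed.

Lemma sperner (U : finType) (D : {set U}) (G : {set {set U}}) :
  (forall A, A \in G -> A \subset D) ->
  (forall A B, A \in G -> B \in G -> A \subset B -> A = B) ->
  #|G| <= 'C(#|D|, #|D|./2).
Proof.
move=> hs ha; have L := lym (erefl #|D|) hs ha.
set d := #|D| in L *.
have hp : 0 < (d./2)`! * (d - d./2)`! by rewrite muln_gt0 !fact_gt0.
rewrite -(leq_pmul2r hp) bin_fact ?half_le //.
apply: leq_trans L.
rewrite -sum1_card big_distrl /=; apply: leq_sum => A hA.
rewrite mul1n; apply: weight_min; exact: subset_leq_card (hs A hA).
Qed.

Lemma sel_lower (T : finType) (F : {set {set T}}) :
  selective F -> #|T| <= 'C(#|F|, #|F|./2).
Proof.
case/andP=> _ /forallP hq.
pose A (q : T) := [set S in F | q \in S].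
have hanti : forall q q', A q \subset A q' -> q = q'.
  move=> q q' hs; have /existsP[I /and3P[hIF _ /eqP hI]] := hq q.
  have : q' \in \bigcap_(S in I) S.
    apply/bigcapP => S hS.
    have hqS : q \in S by move: (set11 q); rewrite -hI => /bigcapP; apply.
    have : S \in A q by rewrite inE (subsetP hIF _ hS) hqS.
    by move/(subsetP hs); rewrite inE => /andP[].
  by rewrite hI in_set1 => /eqP.
have hinj : injective A by move=> q q' e; apply: hanti; rewrite e.
rewrite -(card_imset _ hinj).
apply: sperner.
- by move=> X /imsetP[q _ ->]; apply/subsetP => S; rewrite inE => /andP[].
- move=> X Y /imsetP[q _ ->] /imsetP[q' _ ->] h; by rewrite (hanti _ _ h).
Qed.

Theorem mainTheorem8 (T : finType) (m : nat) :
  1 < #|T| ->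
  0 < m -> #|T| <= 'C(m, m./2) ->
  (forall k : nat, 0 < k -> #|T| <= 'C(k, k./2) -> m <= k) ->
  sel T = m.
Proof.
move=> hT hm hC hmin.
rewrite /sel; case: ex_minnP => k /existsP[F /andP[hF /eqP hk]] hkmin.
apply/eqP; rewrite eqn_leq; apply/andP; split; last first.
  apply: hmin; last by rewrite -hk; exact: sel_lower.
  rewrite lt0n; apply/eqP => k0; have := sel_lower hF; rewrite hk k0 bin0n /= => h; by have := leq_trans hT h.
have m2 : 1 < m.
  have : m != 1.
    apply/eqP=> e; rewrite e bin0 in hC.
    by have := leq_trans hT hC.
  lia.
pose S := [set X : {set 'I_m} | #|X| == m./2].
have cS : #|S| = 'C(m, m./2) by rewrite card_draws card_ord.
pose B (q : T) : {set 'I_m} := nth set0 (enum S) (enum_rank q).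
have hsz : forall q : T, enum_rank q < size (enum S).
  by move=> q; rewrite -cardE cS; apply: leq_trans hC.
have Binj : injective B.
  move=> q q' e; apply: enum_rank_inj; apply/val_inj/eqP.
  by rewrite -(nth_uniq set0 (hsz q) (hsz q') (enum_uniq _)); exact/eqP.
have BS : forall q, #|B q| = m./2.
  move=> q; have : B q \in S by rewrite -mem_enum mem_nth.
  by rewrite inE => /eqP.
pose Sf (i : 'I_m) : {set T} := [set q | i \in B q].
pose F0 := [set Sf i | i : 'I_m] :\ set0.
have hsel : selective F0.
  apply/andP; split; first by rewrite !inE eqxx.
  apply/forallP => q; apply/existsP; exists [set Sf i | i in B q].
  apply/and3P; split.
  - apply/subsetP => X /imsetP[i hi ->]; rewrite !inE.
    apply/andP; split; last by apply/imsetP; exists i.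
    by apply/set0Pn; exists q; rewrite inE.
  - have : 0 < #|B q| by rewrite BS; have := hd m; case: odd => /=; lia.
    case/card_gt0P => i hi; apply/set0Pn; exists (Sf i); exact: imset_f.
  - apply/eqP/setP => x; rewrite in_set1.
    apply/bigcapP/eqP => [hx|->]; last first.
      by move=> X /imsetP[i hi ->]; rewrite inE.
    apply: Binj; apply/eqP; rewrite eq_sym eqEcard BS -(BS q) leqnn andbT.
    apply/subsetP => i hi; have := hx (Sf i) (imset_f _ hi); by rewrite inE.
apply: leq_trans (hkmin #|F0| _) _.
  by apply/existsP; exists F0; rewrite hsel eqxx.
apply: leq_trans (subset_leq_card (subsetDl _ _)) _.
by apply: leq_trans (leq_imset_card _ _) _; rewrite card_ord.
Qed.
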